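(* For all integers $n,k\ge 0$ we have $F_{n,k}\in\{0,1\}$; that is, $F$ is a $0$-$1$ matrix.
   Context: Define maps $G,S:\mathbb Z^2\to\mathbb Z^2$ by $G(x,y)=(x+y,y)$ and $S(x,y)=(3x-2y+1,\,2x-y+1)$. Define the array $(F_{n,k})_{n,k\ge 0}$ by $F_{0,0}=1$ and, for $(n,k)\neq(0,0)$, $F_{n,k}$ is the number of finite words $w=w_1w_2\cdots w_m$ ($m\ge 0$) over the alphabet $\{G,S\}$ with $w_1\circ w_2\circ\cdots\circ w_m(1,1)=(n,k)$ (the empty word acts as the identity). Equivalently: start with all entries $0$, set $F_{0,0}=1$ and $F_{1,1}=1$, and thereafter, whenever an entry $F_{n,k}$ with $n\ge 1$ changes its value, increase $F_{n+k,k}$ and $F_{3n+1-2k,\,2n+1-k}$ by $1$. *)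

(* Defs.v *)
From Stdlib Require Import ZArith List Arith.
Import ListNotations.
Open Scope Z_scope.

Definition G (p : Z * Z) : Z * Z := (fst p + snd p, snd p).
Definition S (p : Z * Z) : Z * Z :=
  (3 * fst p - 2 * snd p + 1, 2 * fst p - snd p + 1).

Definition act (a : bool) (p : Z * Z) : Z * Z := if a then G p else S p.

(* w = w_1 w_2 ... w_m acts as w_1 o w_2 o ... o w_m (w_m applied first). *)
Definition eval_word (w : list bool) (p : Z * Z) : Z * Z :=
  fold_right act p w.

Fixpoint words (m : nat) : list (list bool) :=
  match m with
  | O => [ [] ]
  | Datatypes.S m' => map (cons true) (words m') ++ map (cons false) (words m')
  end.

Definition pair_eqb (p q : Z * Z) : bool :=
  Z.eqb (fst p) (fst q) && Z.eqb (snd p) (snd q).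

Definition count_len (m : nat) (n k : nat) : nat :=
  length (filter (fun w => pair_eqb (eval_word w (1, 1)) (Z.of_nat n, Z.of_nat k))
                 (words m)).

(* Truncated version of F_{n,k}: words of length <= L only.
   F_{n,k} is the (possibly infinite) limit of F_upto L n k as L -> oo,
   which is nondecreasing in L. F_{0,0} = 1 by convention. *)
Definition F_upto (L : nat) (n k : nat) : nat :=
  if (Nat.eqb n 0 && Nat.eqb k 0)%bool then 1%nat
  else fold_right Nat.add 0%nat (map (fun m => count_len m n k) (seq 0 (Datatypes.S L))).

(* Main.v *)
Require Import Defs.
From Stdlib Require Import ZArith List Arith.
From Stdlib Require Import Lia Classical.
Import ListNotations.

Definition Rch (p : Z * Z) : Prop :=
  (1 <= snd p <= fst p)%Z.

Lemma eval_inv : forall w, Rch (eval_word w (1,1)%Z) /\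
  (fst (eval_word w (1,1)%Z) + snd (eval_word w (1,1)%Z) >= 2 + Z.of_nat (length w))%Z.
Proof.
  unfold eval_word. induction w as [|a w IH]; cbn [fold_right length].
  - unfold Rch; cbn [fst snd]; lia.
  - rewrite Nat2Z.inj_succ.
    destruct (fold_right act (1,1)%Z w) as [x y]. unfold Rch in *; cbn [fst snd] in *.
    destruct a; unfold act, G, S; cbn [fst snd]; lia.
Qed.

Lemma eval_cons : forall a w p, eval_word (a::w) p = act a (eval_word w p).
Proof. reflexivity. Qed.

Lemma eval_inj : forall w1 w2,
  eval_word w1 (1,1)%Z = eval_word w2 (1,1)%Z -> w1 = w2.
Proof.
  induction w1 as [|a u IH]; intros [|b v] H; auto.
  - rewrite eval_cons in H. pose proof (proj1 (eval_inv v)) as Hq.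
    change (eval_word [] (1,1)%Z) with (1,1)%Z in H.
    destruct (eval_word v (1,1)%Z) as [q1 q2]. unfold Rch in Hq; cbn [fst snd] in *.
    destruct b; unfold act, G, S in H; cbn [fst snd] in H; pose proof (f_equal fst H); pose proof (f_equal snd H); cbn [fst snd] in *; exfalso; lia.
  - rewrite eval_cons in H. pose proof (proj1 (eval_inv u)) as Hq.
    change (eval_word [] (1,1)%Z) with (1,1)%Z in H.
    destruct (eval_word u (1,1)%Z) as [q1 q2]. unfold Rch in Hq; cbn [fst snd] in *.
    destruct a; unfold act, G, S in H; cbn [fst snd] in H; pose proof (f_equal fst H); pose proof (f_equal snd H); cbn [fst snd] in *; exfalso; lia.
  - rewrite !eval_cons in H.
    pose proof (proj1 (eval_inv u)) as Hp. pose proof (proj1 (eval_inv v)) as Hq.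
    pose proof (IH v) as IHv.
    destruct (eval_word u (1,1)%Z) as [p1 p2].
    destruct (eval_word v (1,1)%Z) as [q1 q2]. unfold Rch in *; cbn [fst snd] in *.
    destruct a, b; unfold act, G, S in H; cbn [fst snd] in H; pose proof (f_equal fst H); pose proof (f_equal snd H); cbn [fst snd] in *.
    + f_equal. apply IHv. f_equal; lia.
    + lia.
    + lia.
    + f_equal. apply IHv. f_equal; lia.
Qed.

Open Scope nat_scope.

Lemma words_len : forall m w, In w (words m) -> length w = m.
Proof.
  induction m; simpl; intros w H.
  - destruct H as [<-|[]]; reflexivity.
  - apply in_app_iff in H. destruct H as [H|H]; apply in_map_iff in H;
    destruct H as [x [<- Hx]]; simpl; rewrite (IHm x Hx); reflexivity.
Qed.

Lemma nodup_map_cons : forall (b : bool) l, NoDup l -> NoDup (map (cons b) l).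
Proof.
  intros b l H; induction H; simpl; constructor; auto.
  intro Hi. apply in_map_iff in Hi. destruct Hi as [y [Hy Hi]].
  injection Hy; intros ->; auto.
Qed.

Lemma words_nodup : forall m, NoDup (words m).
Proof.
  induction m; simpl.
  - constructor; [intros []|constructor].
  - apply NoDup_app; try apply nodup_map_cons; auto.
    intros a H1 H2. apply in_map_iff in H1; apply in_map_iff in H2.
    destruct H1 as [x [<- _]]; destruct H2 as [y [Hy _]]; discriminate.
Qed.

Lemma filter_le1 : forall (A : Type) (P : A -> bool) l, NoDup l ->
  (forall x y, In x l -> In y l -> P x = true -> P y = true -> x = y) ->
  length (filter P l) <= 1.
Proof.
  intros A P l Hn; induction Hn as [|a l Ha Hn IH]; intros Hu; simpl; auto.
  destruct (P a) eqn:E.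
  - destruct (filter P l) as [|z r] eqn:Ef; simpl; auto.
    exfalso. assert (Hz : In z (filter P l)) by (rewrite Ef; left; auto).
    apply filter_In in Hz. destruct Hz as [Hz1 Hz2].
    assert (z = a) by (apply Hu; simpl; auto). subst; auto.
  - apply IH. intros; apply Hu; simpl; auto.
Qed.

Lemma pair_eqb_true : forall p q, pair_eqb p q = true -> p = q.
Proof.
  intros [a b] [c d]; unfold pair_eqb; simpl; intro H.
  apply Bool.andb_true_iff in H; destruct H as [H1 H2].
  apply Z.eqb_eq in H1; apply Z.eqb_eq in H2; subst; auto.
Qed.

Lemma count_le1 : forall m n k, count_len m n k <= 1.
Proof.
  intros; unfold count_len. apply filter_le1; [apply words_nodup|].
  intros x y _ _ Hx Hy. apply pair_eqb_true in Hx; apply pair_eqb_true in Hy.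
  apply eval_inj; congruence.
Qed.

Lemma count_zero : forall m n k,
  (forall w, length w = m -> eval_word w (1,1)%Z <> (Z.of_nat n, Z.of_nat k)) ->
  count_len m n k = 0.
Proof.
  intros m n k H; unfold count_len.
  destruct (filter _ (words m)) as [|z r] eqn:Ef; auto. exfalso.
  assert (Hz : In z (filter (fun w => pair_eqb (eval_word w (1, 1)%Z) (Z.of_nat n, Z.of_nat k)) (words m)))
    by (rewrite Ef; left; auto).
  apply filter_In in Hz. destruct Hz as [Hz1 Hz2].
  apply (H z); [apply words_len; auto | apply pair_eqb_true; auto].
Qed.

Lemma sum_single : forall (g : nat -> nat) m0 c,
  (forall m, m <> m0 -> g m = 0) -> g m0 = c ->
  forall len s, fold_right Nat.add 0 (map g (seq s len)) =
    if (Nat.leb s m0 && Nat.ltb m0 (s + len))%bool then c else 0.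
Proof.
  intros g m0 c H0 Hc len. induction len; intros s; simpl.
  - destruct (Nat.leb s m0) eqn:E1; destruct (Nat.ltb m0 (s+0)) eqn:E2; simpl; auto.
    apply Nat.leb_le in E1; apply Nat.ltb_lt in E2; lia.
  - rewrite IHlen.
    destruct (Nat.eq_dec s m0) as [->|Hne].
    + rewrite Hc.
      destruct (Nat.leb (Datatypes.S m0) m0) eqn:E1; [apply Nat.leb_le in E1; lia|].
      rewrite (proj2 (Nat.leb_le m0 m0)) by lia.
      rewrite (proj2 (Nat.ltb_lt m0 (m0 + Datatypes.S len))) by lia. simpl; lia.
    + rewrite H0 by auto.
      repeat match goal with
      | |- context [Nat.leb ?a ?b] => destruct (Nat.leb_spec a b)
      | |- context [Nat.ltb ?a ?b] => destruct (Nat.ltb_spec a b)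
      end; simpl; lia.
Qed.

Open Scope Z_scope.

Theorem corollary5 : forall n k : nat,
  exists b : nat, (b <= 1)%nat /\
    exists L0 : nat, forall L : nat, (L0 <= L)%nat -> F_upto L n k = b.
Proof.
  intros n k. unfold F_upto.
  destruct (Nat.eqb n 0 && Nat.eqb k 0)%bool.
  { exists 1%nat; split; auto. exists 0%nat; auto. }
  destruct (classic (exists w, eval_word w (1,1)%Z = (Z.of_nat n, Z.of_nat k)))
    as [[w0 Hw0]|Hno].
  - exists (count_len (length w0) n k). split; [apply count_le1|].
    exists (length w0). intros L HL.
    rewrite (sum_single (fun m => count_len m n k) (length w0) (count_len (length w0) n k)); auto.
    + rewrite (proj2 (Nat.leb_le 0%nat (length w0))) by lia.
      rewrite (proj2 (Nat.ltb_lt (length w0) (0%nat + Datatypes.S L))) by lia. reflexivity.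
    + intros m Hm. apply count_zero. intros w Hw He.
      apply Hm. rewrite <- Hw. f_equal. apply eval_inj. congruence.
  - exists 0%nat; split; auto. exists 0%nat. intros L _.
    rewrite (sum_single (fun m => count_len m n k) 0%nat 0%nat).
    + destruct (_ && _)%bool; auto.
    + intros m _. apply count_zero. intros w _ He. apply Hno; eauto.
    + apply count_zero. intros w _ He. apply Hno; eauto.
Qed.
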